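(* Let $n\geq 1$, let $G$ be a group, and suppose that $S$ is a totally symmetric subset of $G$ with $|S| = n$. If the elements of $S$ have finite order, then $|G|\geq 2^{n-1}n!$.
   Context: A totally symmetric subset of a group $G$ is a finite subset $\{g_1,\ldots,g_n\}$ of $G$ such that (1) the elements $g_i$ pairwise commute, and (2) for every permutation $\sigma\in S_n$ there exists $h\in G$ with $hg_ih^{-1}=g_{\sigma(i)}$ for all $1\leq i\leq n$. *)

(* Defs.v *)
From mathcomp Require Import all_boot all_fingroup.
Set Implicit Arguments. Unset Strict Implicit. Unset Printing Implicit Defensive.

Record is_group (G : Type) (mul : G -> G -> G) (one : G) (inv : G -> G) : Prop :=
  IsGroup {
    grp_mulA : forall x y z, mul x (mul y z) = mul (mul x y) z;
    grp_mul1g : forall x, mul one x = x;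
    grp_mulVg : forall x, mul (inv x) x = one
  }.

Definition gpow (G : Type) (mul : G -> G -> G) (one : G) (x : G) (k : nat) : G :=
  iter k (mul x) one.

(* g : 'I_n -> G injective enumerates a totally symmetric subset
   {g_0, ..., g_(n-1)} of size n. *)
Definition totally_symmetric (G : Type) (mul : G -> G -> G) (inv : G -> G)
  (n : nat) (g : 'I_n -> G) : Prop :=
  injective g /\
  (forall i j, mul (g i) (g j) = mul (g j) (g i)) /\
  (forall s : 'S_n, exists h : G,
      forall i, mul (mul h (g i)) (inv h) = g (s i)).

Definition card_ge (G : Type) (m : nat) : Prop :=
  exists f : 'I_m -> G, injective f.

(* Main.v *)
Require Import Defs.
From mathcomp Require Import all_boot all_fingroup.
Set Implicit Arguments. Unset Strict Implicit. Unset Printing Implicit Defensive.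

Lemma gmulV G mul one inv (Hg : @is_group G mul one inv) x : mul x (inv x) = one.
Proof.
case: Hg => A L V.
have e1 : mul x (inv x) = mul (mul (inv (inv x)) (inv x)) (mul x (inv x)) by rewrite V L.
by rewrite e1 -A (A (inv x) x) V L V.
Qed.

Lemma gmul1 G mul one inv (Hg : @is_group G mul one inv) x : mul x one = x.
Proof.
have V' := gmulV Hg x; case: Hg => A L V.
by rewrite -(V x) A V' L.
Qed.

Lemma gcancl G mul one inv (Hg : @is_group G mul one inv) a x y :
  mul a x = mul a y -> x = y.
Proof.
move=> e; case: (Hg) => A L V.
by rewrite -(L x) -(L y) -(V a) -!A e.
Qed.

Lemma gcancr G mul one inv (Hg : @is_group G mul one inv) a x y :
  mul x a = mul y a -> x = y.
Proof.
move=> e; have V' := gmulV Hg a; have R := gmul1 Hg; case: (Hg) => A L V.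
by rewrite -(R x) -(R y) -V' !A e.
Qed.

Definition conjg G (mul : G -> G -> G) (inv : G -> G) h x := mul (mul h x) (inv h).

Lemma conj_mul G mul one inv (Hg : @is_group G mul one inv) h x y :
  conjg mul inv h (mul x y) = mul (conjg mul inv h x) (conjg mul inv h y).
Proof.
rewrite /conjg; have V := gmulV Hg h; have R := gmul1 Hg; case: (Hg) => A L _.
case: Hg => _ _ V0; by rewrite -!A (A (inv h) h) V0 L.
Qed.

Definition P G (mul : G -> G -> G) one n (g : 'I_n -> G) (s : seq 'I_n) :=
  foldr (fun i acc => mul (g i) acc) one s.

Lemma P_comm G mul one inv (Hg : @is_group G mul one inv) n (g : 'I_n -> G)
  (gc : forall i j, mul (g i) (g j) = mul (g j) (g i)) k s :
  mul (g k) (P mul one g s) = mul (P mul one g s) (g k).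
Proof.
have R := gmul1 Hg; case: (Hg) => A L _.
elim: s => [|a s IH] /=; first by rewrite R L.
by rewrite A gc -A IH A.
Qed.

Lemma P_rem G mul one inv (Hg : @is_group G mul one inv) n (g : 'I_n -> G)
  (gc : forall i j, mul (g i) (g j) = mul (g j) (g i)) i s :
  i \in s -> P mul one g s = mul (g i) (P mul one g (rem i s)).
Proof.
case: (Hg) => A L _.
elim: s => [|a s IH] //=; rewrite in_cons.
case: (eqVneq i a) => [-> _|ne] /=; first done.
move=> His; rewrite (IH His).
by rewrite A gc -A.
Qed.

Lemma conj_P G mul one inv (Hg : @is_group G mul one inv) n (g : 'I_n -> G)
  h (sg : 'I_n -> 'I_n) (Hh : forall k, conjg mul inv h (g k) = g (sg k)) s :
  conjg mul inv h (P mul one g s) = P mul one g (map sg s).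
Proof.
elim: s => [|a s IH] /=.
  by rewrite /conjg (gmul1 Hg) (gmulV Hg).
by rewrite (conj_mul Hg) IH Hh.
Qed.

Definition sE m (E : {ffun 'I_m -> bool}) : seq 'I_m.+1 :=
  map (widen_ord (leqnSn m)) [seq j <- enum 'I_m | E j].

Lemma mem_sE_w m (E : {ffun 'I_m -> bool}) j :
  (widen_ord (leqnSn m) j \in sE E) = E j.
Proof.
rewrite mem_map; last by move=> x y /(congr1 val) /= /val_inj.
by rewrite mem_filter mem_enum andbT.
Qed.

Lemma mem_sE m (E : {ffun 'I_m -> bool}) k :
  k \in sE E -> exists2 j, k = widen_ord (leqnSn m) j & E j.
Proof.
by case/mapP => j; rewrite mem_filter => /andP[Ej _] ->; exists j.
Qed.

Lemma sE_max m (E : {ffun 'I_m -> bool}) : ord_max \notin sE E.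
Proof.
apply/negP => /mem_sE [j /(congr1 val) /= ej _].
by move: (ltn_ord j); rewrite -ej ltnn.
Qed.

Lemma uniq_sE m (E : {ffun 'I_m -> bool}) : uniq (sE E).
Proof.
rewrite map_inj_uniq; first by apply: filter_uniq; apply: enum_uniq.
by move=> x y /(congr1 val) /= /val_inj.
Qed.

Lemma Q_aux G mul one inv (Hg : @is_group G mul one inv) m (g : 'I_m.+1 -> G)
  (ginj : injective g) (gc : forall i j, mul (g i) (g j) = mul (g j) (g i))
  (gsym : forall s : 'S_m.+1, exists h, forall i, mul (mul h (g i)) (inv h) = g (s i))
  E F j :
  P mul one g (sE E) = P mul one g (sE F) -> E j -> ~~ F j -> False.
Proof.
move=> eq Ej Fj.
set i := widen_ord (leqnSn m) j.
have [h Hh] := gsym (tperm i ord_max).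
have iE : i \in sE E by rewrite mem_sE_w.
have fix_t : forall k, k != i -> k != ord_max -> tperm i ord_max k = k.
  by move=> k ki km; apply: tpermD; rewrite eq_sym.
have c1 : conjg mul inv h (P mul one g (sE F)) = P mul one g (sE F).
  rewrite (conj_P Hg Hh) map_id_in // => k kF; apply: fix_t.
    by apply: contraNneq Fj => ki; rewrite -(mem_sE_w F) -/i -ki.
  by apply: contraNneq (sE_max F) => <-.
have c2 : conjg mul inv h (P mul one g (sE E)) =
          mul (g ord_max) (P mul one g (rem i (sE E))).
  rewrite (P_rem Hg gc iE) (conj_mul Hg) (conj_P Hg Hh) /conjg Hh tpermL map_id_in //.
  move=> k kr; apply: fix_t.
    by move: kr; rewrite mem_rem_uniq ?uniq_sE // => /andP[].
  by apply: contraNneq (sE_max E) => ek; move: kr; rewrite -ek; apply: mem_rem.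
have : mul (g ord_max) (P mul one g (rem i (sE E))) =
       mul (g i) (P mul one g (rem i (sE E))).
  by rewrite -c2 eq c1 -eq (P_rem Hg gc iE).
move/(gcancr Hg)/ginj/(congr1 val) => /= ei.
by move: (ltn_ord j); rewrite -ei ltnn.
Qed.

Theorem proposition2p2 (G : Type) (mul : G -> G -> G) (one : G) (inv : G -> G)
  (n : nat) (g : 'I_n -> G) :
  is_group mul one inv ->
  1 <= n ->
  totally_symmetric mul inv g ->
  (forall i, exists k, 0 < k /\ gpow mul one (g i) k = one) ->
  card_ge G (2 ^ n.-1 * n`!).
Proof.
move=> Hg Hn [ginj [gc gsym]] _.
case: n Hn g ginj gc gsym => [//|m] _ g ginj gc gsym.
have [h Hh] := fin_all_exists gsym.
have [A L V] := Hg.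
pose Fm (p : 'S_m.+1 * {ffun 'I_m -> bool}) := mul (h p.1) (P mul one g (sE p.2)).
have hs : forall (s : 'S_m.+1) k, mul (h s) (g k) = mul (g (s k)) (h s).
  by move=> s' k; rewrite -(Hh s' k) -A V (gmul1 Hg).
have Finj : injective Fm.
  move=> [s E] [r F]; rewrite /Fm /= => e.
  have sr : s = r.
    apply/permP => k; apply: ginj.
    apply: (gcancr Hg (a := mul (h s) (P mul one g (sE E)))).
    have e1 : forall (t : 'S_m.+1) X, mul (g (t k)) (mul (h t) (P mul one g (sE X)))
        = mul (mul (h t) (P mul one g (sE X))) (g k).
      by move=> t X; rewrite A -hs -!A (P_comm Hg gc).
    by rewrite e1 {2}e e1 e.
  subst r; congr pair; have e' := gcancl Hg e.
  apply/ffunP => k; case Ek: (E k); case Fk: (F k) => //; exfalso.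
    by apply: (Q_aux Hg ginj gc gsym e' Ek); rewrite Fk.
  by apply: (Q_aux Hg ginj gc gsym (esym e') Fk); rewrite Ek.
have eqc : 2 ^ m.+1.-1 * m.+1`! = #|{: 'S_m.+1 * {ffun 'I_m -> bool}}|.
  by rewrite card_prod card_Sn card_ffun card_bool card_ord mulnC.
exists (fun i => Fm (enum_val (cast_ord eqc i))).
by move=> x y /Finj /enum_val_inj /cast_ord_inj.
Qed.
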